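(* Let $A\in\mathcal{S}$ with elements $a_0<a_1<\dots<a_{n-1}$ and greatest element $a_{\max}=a_{n-1}$. Then $A$ is decomposable if and only if there is an $i<n-1$ such that $o(a_i,a_{\max})=0$.
   Context: $\mathrm{Homeo}_+(I)$ acts on $I=[0,1]$ on the right, composition left to right, $f^g=g^{-1}fg$. Support $\mathrm{supt}(f)=\{t:tf\ne t\}$; extended support = interior of its closure; orbitals = components of the support, endpoints = transition points; a bump has exactly one orbital, positive if $tf>t$ there, else negative; the bump of $g$ on an orbital $J$ agrees with $g$ on $J$ and is the identity elsewhere. A marking assigns to each bump $a$ with support $(u,v)$ a point $s_a\in(u,v)$; feet of $a$: $(u,s_a)$ and $[t_a,v)$ with $t_a=s_aa$ ($a$ positive) or $s_aa^{-1}$ ($a$ negative). A marked function has finitely many bumps, each marked. A finite set of marked functions is fast if no bump occurs in two of its elements and distinct bumps have disjoint feet. A standard function is a marked function whose extended support is an interval, with all positive bumps right of all negative bumps, and #positive $-$ #negative bumps $\in\{0,1\}$. For standard $f,g$: $f\ll g$ iff extended supports disjoint with $f$'s to the left; $f\sqsubset g$ iff closure of extended support of $f$ lies in extended support of $g$; $f<g$ iff $f\ll g$ or $f\sqsubset g$. $f^\circ$: if $f$ has $>2$ orbitals, $f$ restricted to the union of its non-extreme orbitals (identity elsewhere, markers inherited); if $f$ has 1 or 2 orbitals and the left foot of its positive bump is $(r,s)$, a positive bump with support $(r,s)$. $(f,g)$ is a standard pair if $\{f,g\}$ is fast and either $f\ll g$ or ($f\sqsubset g$ and $(g^\circ,f)$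 is a standard pair). $\mathcal{S}$ = finite sets of standard functions, pairwise $<$-comparable, each pair $f<g$ a standard pair. For $f<g$ the oscillation $o(f,g)$ is the number of orbitals of $g$ containing a transition point of $f$. For $A,B,C\in\mathcal S$, $A=B+C$ means $A=B\cup C$ and $b\ll c$ for all $b\in B$, $c\in C$; $A$ is decomposable if $A=B+C$ for some nonempty $B,C$, and indecomposable otherwise. *)

(* Defs.v *)
From Stdlib Require Import Reals Lra List.
Open Scope R_scope.

(* Points of I = [0,1]. Homeo_+(I) acts on the right: t f := f t. *)
Definition inI (t : R) : Prop := 0 <= t <= 1.

(* Orientation-preserving homeomorphism of I: an increasing bijection of I onto
   itself (continuity is automatic).  Values outside I are irrelevant. *)
Definition homeo (f : R -> R) : Prop :=
  (forall x, inI x -> inI (f x)) /\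
  (forall x y, inI x -> inI y -> x < y -> f x < f y) /\
  (forall y, inI y -> exists x, inI x /\ f x = y).

Definition supt (f : R -> R) (t : R) : Prop := inI t /\ f t <> t.
Definition closure (S : R -> Prop) (x : R) : Prop :=
  forall e, 0 < e -> exists y, S y /\ Rabs (x - y) < e.
Definition interior (S : R -> Prop) (x : R) : Prop :=
  exists e, 0 < e /\ forall y, Rabs (x - y) < e -> S y.
Definition ext_supt (f : R -> R) : R -> Prop := interior (closure (supt f)).

Definition is_interval (S : R -> Prop) : Prop :=
  (exists x, S x) /\ forall x y z, S x -> S z -> x <= y <= z -> S y.

Definition orbital (f : R -> R) (u v : R) : Prop :=
  0 <= u /\ u < v /\ v <= 1 /\ f u = u /\ f v = v /\
  forall t, u < t < v -> f t <> t.

Definition pos_on (f : R -> R) (u v : R) : Prop := forall t, u < t < v -> f t > t.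
Definition neg_on (f : R -> R) (u v : R) : Prop := forall t, u < t < v -> f t < t.

(* A (candidate) marked function: the homeomorphism together with a marker
   assignment; the marker of the orbital (u,v) is [mk u]. *)
Record marked := Marked { fn : R -> R ; mk : R -> R }.

Definition dflt : marked := Marked (fun x => x) (fun x => x).

Definition count_orbitals (f : R -> R) (P : R -> R -> Prop) (n : nat) : Prop :=
  exists l : list (R * R), NoDup l /\ length l = n /\
    forall u v, In (u, v) l <-> (orbital f u v /\ P u v).

Definition is_marked (a : marked) : Prop :=
  homeo (fn a) /\
  (exists l : list (R * R), forall u v, orbital (fn a) u v -> In (u, v) l) /\
  (forall u v, orbital (fn a) u v -> u < mk a u < v).

Definition in_feet (a : marked) (u v x : R) : Prop :=
  let s := mk a u in
  (u < x < s) \/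
  (pos_on (fn a) u v /\ fn a s <= x < v) \/
  (neg_on (fn a) u v /\ exists t, inI t /\ fn a t = s /\ t <= x < v).

Definition same_bump (a : marked) (u v : R) (b : marked) (u' v' : R) : Prop :=
  u = u' /\ v = v' /\ forall t, u < t < v -> fn a t = fn b t.

Definition fast (L : list marked) : Prop :=
  (forall i j u v u' v', (i < length L)%nat -> (j < length L)%nat -> i <> j ->
     orbital (fn (nth i L dflt)) u v -> orbital (fn (nth j L dflt)) u' v' ->
     ~ same_bump (nth i L dflt) u v (nth j L dflt) u' v') /\
  (forall i j u v u' v', (i < length L)%nat -> (j < length L)%nat ->
     orbital (fn (nth i L dflt)) u v -> orbital (fn (nth j L dflt)) u' v' ->
     ~ same_bump (nth i L dflt) u v (nth j L dflt) u' v' ->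
     ~ exists x, in_feet (nth i L dflt) u v x /\ in_feet (nth j L dflt) u' v' x).

Definition standard (a : marked) : Prop :=
  is_marked a /\
  is_interval (ext_supt (fn a)) /\
  (forall u v u' v', orbital (fn a) u v -> pos_on (fn a) u v ->
     orbital (fn a) u' v' -> neg_on (fn a) u' v' -> v' <= u) /\
  exists np nn, count_orbitals (fn a) (pos_on (fn a)) np /\
    count_orbitals (fn a) (neg_on (fn a)) nn /\
    (np = nn \/ np = S nn).

Definition ll (f g : marked) : Prop :=
  forall x y, ext_supt (fn f) x -> ext_supt (fn g) y -> x < y.
Definition sq (f g : marked) : Prop :=
  forall x, closure (ext_supt (fn f)) x -> ext_supt (fn g) x.
Definition lt (f g : marked) : Prop := ll f g \/ sq f g.

Definition nonextreme (f : R -> R) (u v : R) : Prop :=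
  orbital f u v /\ (exists a b, orbital f a b /\ b <= u) /\
  (exists a b, orbital f a b /\ v <= a).

(* [circ f h] : h is (a valid choice of) f° *)
Definition circ (f h : marked) : Prop :=
  (exists n, count_orbitals (fn f) (fun _ _ => True) n /\ (n > 2)%nat /\
     (forall t, inI t ->
        fn h t = (fn f t) /\ (exists u v, nonextreme (fn f) u v /\ u < t < v)
        \/ fn h t = t /\ ~ (exists u v, nonextreme (fn f) u v /\ u < t < v)) /\
     (forall u v, orbital (fn h) u v -> mk h u = mk f u))
  \/
  ((count_orbitals (fn f) (fun _ _ => True) 1 \/
    count_orbitals (fn f) (fun _ _ => True) 2) /\
   exists u v, orbital (fn f) u v /\ pos_on (fn f) u v /\
     is_marked h /\
     (forall a b, orbital (fn h) a b <-> (a = u /\ b = mk f u)) /\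
     pos_on (fn h) u (mk f u)).

Inductive standard_pair : marked -> marked -> Prop :=
| sp_ll : forall f g, fast (f :: g :: nil) -> ll f g -> standard_pair f g
| sp_sq : forall f g, fast (f :: g :: nil) -> sq f g ->
    (forall h, circ g h -> standard_pair h f) -> standard_pair f g.

Definition inS (A : list marked) : Prop :=
  NoDup A /\
  (forall a, In a A -> standard a) /\
  (forall a b, In a A -> In b A -> a <> b -> lt a b \/ lt b a) /\
  (forall a b, In a A -> In b A -> lt a b -> standard_pair a b).

Definition osc (f g : marked) (n : nat) : Prop :=
  count_orbitals (fn g)
    (fun u v => exists a b, orbital (fn f) a b /\ ((u < a < v) \/ (u < b < v))) n.

Definition decomposable (A : list marked) : Prop :=
  exists B C : list marked, B <> nil /\ C <> nil /\ inS B /\ inS C /\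
    (forall x, In x A <-> In x B \/ In x C) /\
    (forall b c, In b B -> In c C -> ll b c).

(* Main.v *)
Require Import Defs.
From Stdlib Require Import Reals List.
From Stdlib Require Import Lra Lia Classical ClassicalDescription.
Open Scope R_scope.

Lemma last_nth_ (l : list marked) d : l <> nil -> last l d = nth (length l - 1) l d.
Proof.
  induction l as [|a l IH]; intros H; [congruence|].
  destruct l as [|b l']; [reflexivity|].
  change (last (a :: b :: l') d) with (last (b :: l') d).
  rewrite IH by congruence.
  simpl. replace (length l' - 0)%nat with (length l') by lia. reflexivity.
Qed.

Lemma homeo_0 f : homeo f -> f 0 = 0.
Proof.
  intros [H1 [H2 H3]].
  destruct (H3 0) as [x [Hx Hfx]]. { unfold inI; lra. }
  destruct (Req_dec x 0) as [->|Hne]; auto.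
  assert (f 0 < f x) by (apply H2; unfold inI in *; lra).
  assert (inI (f 0)) by (apply H1; unfold inI; lra). unfold inI in *. lra.
Qed.

Lemma left_fix f t : homeo f -> inI t -> f t <> t ->
  exists u, 0 <= u < t /\ f u = u /\ forall s, u < s <= t -> f s <> s.
Proof.
  intros Hh Ht Hne.
  pose proof (homeo_0 f Hh) as H0.
  destruct Hh as [H1 [H2 H3]].
  set (E := fun x => 0 <= x <= t /\ f x = x).
  assert (Hb : bound E) by (exists t; intros x [Hx _]; lra).
  assert (Hex : exists x, E x) by (exists 0; split; [unfold inI in Ht; lra | exact H0]).
  destruct (completeness E Hb Hex) as [u [Hub Hlub]].
  assert (Hu0 : 0 <= u) by (apply Hub; split; [unfold inI in Ht; lra| exact H0]).
  assert (Hut : u <= t) by (apply Hlub; intros x [Hx _]; lra).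
  assert (HuI : inI u) by (unfold inI in *; lra).
  assert (HfuI := H1 u HuI).
  assert (Hfu : f u = u).
  { destruct (Rtotal_order (f u) u) as [Hlt|[Heq|Hgt]]; auto.
    - exfalso.
      assert (exists x, E x /\ f u < x) as [x [[Hx Hfx] Hxl]].
      { apply NNPP; intro Hn. assert (u <= f u). { apply Hlub. intros x Ex.
        destruct (Rle_dec x (f u)); auto. exfalso; apply Hn; exists x; split; auto; lra. } lra. }
      assert (x <= u) by (apply Hub; split; auto).
      destruct (Req_dec x u) as [->|Hxu]. { lra. }
      assert (f x < f u) by (apply H2; unfold inI in *; lra). lra.
    - exfalso.
      destruct (H3 ((u + f u)/2)) as [w [Hw Hfw]]. { unfold inI in *; lra. }
      assert (Hwu : w < u).
      { destruct (Rtotal_order w u) as [?|[->|?]]; auto; try lra.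
        assert (f u < f w) by (apply H2; auto). lra. }
      assert (exists x, E x /\ w < x) as [x [[Hx Hfx] Hxw]].
      { apply NNPP; intro Hn. assert (u <= w). { apply Hlub. intros x Ex.
        destruct (Rle_dec x w); auto. exfalso; apply Hn; exists x; split; auto; lra. } lra. }
      assert (x <= u) by (apply Hub; split; auto).
      assert (f w < f x) by (apply H2; unfold inI in *; lra). lra. }
  exists u. repeat split; auto.
  - destruct (Req_dec u t) as [->|?]; [contradiction| lra].
  - intros s Hs Hfs. assert (s <= u) by (apply Hub; split; [lra|auto]). lra.
Qed.

Lemma component f t : homeo f -> inI t -> f t <> t ->
  exists u v, orbital f u v /\ u < t < v.
Proof.
  intros Hh Ht Hne.
  destruct (left_fix f t Hh Ht Hne) as [u [Hu [Hfu Hl]]].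
  set (g := fun x => 1 - f (1 - x)).
  assert (Hg : homeo g).
  { destruct Hh as [H1 [H2 H3]]. unfold g; split; [|split].
    - intros x Hx. assert (H : inI (1-x)) by (unfold inI in *; lra).
      specialize (H1 _ H). unfold inI in *; lra.
    - intros x y Hx Hy Hxy. assert (f (1-y) < f (1-x)) by (apply H2; unfold inI in *; lra). lra.
    - intros y Hy. destruct (H3 (1-y)) as [x [Hx Hfx]]. { unfold inI in *; lra. }
      exists (1-x). split. { unfold inI in *; lra. }
      replace (1-(1-x)) with x by ring. lra. }
  assert (HtI : inI (1-t)) by (unfold inI in *; lra).
  assert (Hgt : g (1-t) <> 1-t).
  { unfold g; replace (1-(1-t)) with t by ring; intro; apply Hne; lra. }
  destruct (left_fix g (1-t) Hg HtI Hgt) as [u' [Hu' [Hgu Hr]]].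
  unfold g in Hgu, Hr.
  exists u, (1-u'). split; [|lra].
  unfold orbital. repeat split; try lra.
  intros s Hs. destruct (Rle_dec s t). { apply Hl; lra. }
  intro Hfs. apply (Hr (1-s)). { lra. } replace (1-(1-s)) with s by ring. lra.
Qed.

Lemma ext_of_orbital f u v w : orbital f u v -> u < w < v -> ext_supt f w.
Proof.
  intros [H0 [Huv [Hv1 [_ [_ Hne]]]]] Hw.
  exists (Rmin (w-u) (v-w)). split. { apply Rmin_glb_lt; lra. }
  pose proof (Rmin_l (w-u) (v-w)); pose proof (Rmin_r (w-u) (v-w)).
  intros y Hy. apply Rabs_def2 in Hy.
  intros e He. exists y. split.
  - split. { unfold inI; lra. } apply Hne; lra.
  - unfold Rminus. rewrite Rplus_opp_r, Rabs_R0. lra.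
Qed.

Lemma closure_self S x : S x -> closure S x.
Proof. intros H e He. exists x. split; auto. unfold Rminus. rewrite Rplus_opp_r, Rabs_R0. lra. Qed.

Lemma ext_nonempty a : standard a -> exists x, ext_supt (fn a) x.
Proof. intros [_ [[H _] _]]. exact H. Qed.

Lemma has_orbital a : standard a -> exists u v, orbital (fn a) u v.
Proof.
  intros Hs. destruct (ext_nonempty a Hs) as [x0 [e [He Hin]]].
  destruct Hs as [[Hh _] _].
  assert (H : closure (supt (fn a)) x0).
  { apply Hin. unfold Rminus. rewrite Rplus_opp_r, Rabs_R0. lra. }
  destruct (H 1) as [t [[Ht Hft] _]]. { lra. }
  destruct (component _ t Hh Ht Hft) as [u [v [Ho _]]]. eauto.
Qed.

Lemma osc_ll_zero f g : ll f g -> osc f g 0.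
Proof.
  intros Hl. exists nil. split; [constructor|]. split; [reflexivity|].
  intros u v. split; [intros []|]. intros [Ho [a [b [Hab Hin]]]]. exfalso.
  pose proof Ho as (H0 & Huv & Hv1 & _).
  pose proof Hab as (Ha0 & Hab' & Hb1 & _).
  destruct Hin as [Ha|Hb].
  - assert (pos: 0 < Rmin (v-a) (b-a)) by (apply Rmin_glb_lt; lra).
    pose proof (Rmin_l (v-a) (b-a)); pose proof (Rmin_r (v-a) (b-a)).
    assert (Hw1 : ext_supt (fn f) (a + Rmin (v-a) (b-a) / 2)) by (apply (ext_of_orbital _ a b); auto; lra).
    assert (Hw2 : ext_supt (fn g) (a + Rmin (v-a) (b-a) / 2)) by (apply (ext_of_orbital _ u v); auto; lra).
    specialize (Hl _ _ Hw1 Hw2). lra.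
  - assert (pos: 0 < Rmin (b-u) (b-a)) by (apply Rmin_glb_lt; lra).
    pose proof (Rmin_l (b-u) (b-a)); pose proof (Rmin_r (b-u) (b-a)).
    assert (Hw1 : ext_supt (fn f) (b - Rmin (b-u) (b-a) / 2)) by (apply (ext_of_orbital _ a b); auto; lra).
    assert (Hw2 : ext_supt (fn g) (b - Rmin (b-u) (b-a) / 2)) by (apply (ext_of_orbital _ u v); auto; lra).
    specialize (Hl _ _ Hw1 Hw2). lra.
Qed.

Fixpoint minabove (a d : R) (L : list (R*R)) : R :=
  match L with
  | nil => d
  | p :: L' => if Rlt_dec a (fst p) then Rmin (fst p) (minabove a d L') else minabove a d L'
  end.

Lemma minabove_spec a d L : a < d -> a < minabove a d L /\ minabove a d L <= d /\
  forall p, In p L -> a < fst p -> minabove a d L <= fst p.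
Proof.
  intros Had. induction L as [|p L IH]; simpl.
  - split; [lra|]. split; [lra|]. intros _ [].
  - destruct IH as [I1 [I2 I3]].
    destruct (Rlt_dec a (fst p)) as [Hp|Hp].
    + pose proof (Rmin_l (fst p) (minabove a d L)); pose proof (Rmin_r (fst p) (minabove a d L)).
      split. { apply Rmin_glb_lt; lra. } split. { lra. }
      intros q [<-|Hq] Hq'. { lra. } specialize (I3 q Hq Hq'). lra.
    + split; [lra|]. split; [lra|]. intros q [<-|Hq] Hq'. { contradiction. } auto.
Qed.

Lemma no_sq (f g : marked) : standard f -> standard g -> fast (f :: g :: nil) ->
  sq f g -> osc f g 0 -> False.
Proof.
  intros Hf Hg Hfast Hsq Hosc.
  destruct (has_orbital f Hf) as [a [b Hab]].
  pose proof Hab as (Ha0 & Hab' & Hb1 & _).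
  assert (Hcl : closure (ext_supt (fn f)) a).
  { intros e He. exists (a + Rmin e (b-a) / 2).
    assert (pos: 0 < Rmin e (b-a)) by (apply Rmin_glb_lt; lra).
    pose proof (Rmin_l e (b-a)); pose proof (Rmin_r e (b-a)).
    split. { apply (ext_of_orbital _ a b); auto; lra. }
    rewrite Rabs_left by lra. lra. }
  destruct (Hsq a Hcl) as [e [He Hin]].
  destruct Hg as [[Hhg [[L HL] Hmkg]] _].
  destruct Hf as [[_ [_ Hmkf]] _].
  destruct (minabove_spec a (a+e) L) as [M1 [M2 M3]]. { lra. }
  set (m := minabove a (a+e) L) in *.
  assert (Hz : closure (supt (fn g)) ((a+m)/2)).
  { apply Hin. rewrite Rabs_left by lra. lra. }
  destruct (Hz ((a+m)/2 - a)) as [y [[HyI Hfy] Hy]]. { lra. }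
  apply Rabs_def2 in Hy.
  destruct (component _ y Hhg HyI Hfy) as [c [d [Hcd Hcy]]].
  assert (HcL := HL c d Hcd).
  destruct (Rtotal_order c a) as [Hca|[Hca|Hca]].
  - destruct Hosc as [l [_ [Hlen Hiff]]].
    destruct l; [|simpl in Hlen; discriminate].
    apply (proj2 (Hiff c d)). split; auto. exists a, b. split; auto. left; lra.
  - subst c.
    pose proof (Hmkf a b Hab) as Hs1. pose proof (Hmkg a d Hcd) as Hs2.
    destruct Hfast as [F1 F2].
    assert (Hnsb : ~ same_bump f a b g a d).
    { apply (F1 0%nat 1%nat a b a d); simpl; auto. }
    apply (F2 0%nat 1%nat a b a d); simpl; auto.
    assert (pos: 0 < Rmin (mk f a - a) (mk g a - a)) by (apply Rmin_glb_lt; lra).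
    pose proof (Rmin_l (mk f a - a) (mk g a - a)); pose proof (Rmin_r (mk f a - a) (mk g a - a)).
    exists (a + Rmin (mk f a - a) (mk g a - a) / 2).
    unfold in_feet; cbv zeta. split; left; lra.
  - specialize (M3 (c,d) HcL Hca). simpl in M3. lra.
Qed.

Lemma inS_sub A B : inS A -> NoDup B -> (forall x, In x B -> In x A) -> inS B.
Proof.
  intros [_ [H1 [H2 H3]]] Hnd Hs. split; [exact Hnd|]. split; [|split].
  - intros a Ha. apply H1, Hs, Ha.
  - intros a b Ha Hb. apply H2; apply Hs; auto.
  - intros a b Ha Hb. apply H3; apply Hs; auto.
Qed.

Theorem lemma4p4 (A : list marked) :
  inS A ->
  A <> nil ->
  (forall i j, (i < j)%nat -> (j < length A)%nat ->
     lt (nth i A dflt) (nth j A dflt)) ->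
  (decomposable A <->
   exists i, (i < length A - 1)%nat /\ osc (nth i A dflt) (last A dflt) 0).
Proof.
  intros HS Hne Hord.
  pose proof HS as [Hnd [Hstd [Hcmp Hsp]]].
  assert (Hn : (0 < length A)%nat) by (destruct A; [congruence| simpl; lia]).
  pose proof (last_nth_ A dflt Hne) as Hlast.
  set (n := length A) in *.
  set (amax := last A dflt) in *.
  assert (HinA : In amax A) by (rewrite Hlast; apply nth_In; lia).
  assert (Hidx : forall x, In x A -> exists i, (i < n)%nat /\ nth i A dflt = x)
    by (intros; apply In_nth; auto).
  assert (Hnll : forall x, In x A -> ~ ll x x).
  { intros x Hx Hl. destruct (ext_nonempty x (Hstd x Hx)) as [y Hy].
    specialize (Hl y y Hy Hy). lra. }
  assert (Hbelow : forall x, In x A -> x <> amax -> lt x amax).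
  { intros x Hx Hxne. destruct (Hidx x Hx) as [i [Hi Hxi]].
    destruct (Nat.eq_dec i (n-1)) as [->|Hi'].
    - exfalso. apply Hxne. rewrite Hlast. auto.
    - rewrite <- Hxi, Hlast. apply Hord; lia. }
  split.
  - intros [B [C [HBn [HCn [HSB [HSC [Hun Hll]]]]]]].
    assert (HamC : In amax C).
    { destruct (proj1 (Hun amax) HinA) as [HB|HC]; auto. exfalso.
      destruct C as [|c C']; [congruence|].
      assert (Hc : In c A) by (apply Hun; right; left; auto).
      assert (Hl := Hll amax c HB (or_introl eq_refl)).
      destruct (ext_nonempty c (Hstd c Hc)) as [x Hx].
      destruct (classic (c = amax)) as [->|Hcne].
      + exact (Hnll _ HinA Hl).
      + destruct (Hbelow c Hc Hcne) as [H|H].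
        * destruct (ext_nonempty amax (Hstd _ HinA)) as [y Hy].
          specialize (Hl y x Hy Hx). specialize (H x y Hx Hy). lra.
        * assert (Hy := H x (closure_self _ _ Hx)). specialize (Hl x x Hy Hx). lra. }
    destruct B as [|b B']; [congruence|].
    assert (Hb : In b A) by (apply Hun; left; left; auto).
    assert (Hl := Hll b amax (or_introl eq_refl) HamC).
    destruct (Hidx b Hb) as [i [Hi Hbi]].
    exists i. split.
    + destruct (Nat.eq_dec i (n-1)) as [Heq|]; [|lia]. exfalso.
      rewrite Heq, <- Hlast in Hbi. subst b. exact (Hnll _ HinA Hl).
    + rewrite Hbi. apply osc_ll_zero. exact Hl.
  - intros [i [Hi Hosc]].
    assert (HaiA : In (nth i A dflt) A) by (apply nth_In; lia).
    assert (Hlt : lt (nth i A dflt) amax) by (rewrite Hlast; apply Hord; lia).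
    assert (Hll1 : ll (nth i A dflt) amax).
    { destruct Hlt as [H|H]; auto. exfalso.
      assert (Hp := Hsp _ amax HaiA HinA (or_intror H)).
      assert (Hf : fast (nth i A dflt :: amax :: nil)) by (inversion Hp; auto).
      exact (no_sq _ amax (Hstd _ HaiA) (Hstd _ HinA) Hf H Hosc). }
    set (P := fun x => if excluded_middle_informative (ll x amax) then true else false).
    assert (HP : forall x, P x = true <-> ll x amax).
    { intros x; unfold P; destruct excluded_middle_informative; split; auto; discriminate. }
    exists (filter P A), (filter (fun x => negb (P x)) A).
    split; [|split; [|split; [|split; [|split]]]].
    + intro H. assert (H' : In (nth i A dflt) (filter P A)).
      { apply filter_In. split; auto. apply HP; auto. }
      rewrite H in H'. exact H'.
    + intro H. assert (H' : In amax (filter (fun x => negb (P x)) A)).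
      { apply filter_In. split; auto. destruct (P amax) eqn:E; auto.
        apply HP in E. exfalso; exact (Hnll _ HinA E). }
      rewrite H in H'. exact H'.
    + apply (inS_sub A); auto. { apply NoDup_filter; auto. }
      intros x Hx. apply filter_In in Hx. tauto.
    + apply (inS_sub A); auto. { apply NoDup_filter; auto. }
      intros x Hx. apply filter_In in Hx. tauto.
    + intros x. rewrite !filter_In. destruct (P x); simpl; tauto.
    + intros b c Hb Hc. apply filter_In in Hb. apply filter_In in Hc.
      destruct Hb as [HbA Hb]. destruct Hc as [HcA Hc].
      apply HP in Hb.
      destruct (classic (c = amax)) as [->|Hcne]; auto.
      destruct (Hbelow c HcA Hcne) as [H|H].
      * exfalso. apply HP in H. rewrite H in Hc. discriminate.
      * intros x y Hx Hy. apply (Hb x y Hx). apply H. apply closure_self; auto.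
Qed.
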